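(* Let $S$ be a semigroup and let $\mathrm{Pr}(S)$ be its predicatization. Then every direct power $\Pi\mathrm{Pr}(S)=\prod_{i\in I}\mathrm{Pr}(S)$ is $\mathcal{L}_{s\text{-}pred}(\Pi S)$-equationally Noetherian if and only if $S$ satisfies both quasi-identities $$\forall a\,\forall b\,\forall \alpha\,\forall\beta\ \big((a\alpha=a\beta)\to(b\alpha=b\beta)\big),$$ $$\forall a\,\forall b\,\forall \alpha\,\forall\beta\ \big((\alpha a=\beta a)\to(\alpha b=\beta b)\big).$$
   Context: The language $\mathcal{L}_{s\text{-}pred}=\{M\}$ has a single ternary relation symbol. The predicatization $\mathrm{Pr}(S)$ of a semigroup $S$ is the $\mathcal{L}_{s\text{-}pred}$-structure with universe $S$ in which $M(x,y,z)$ holds iff $xy=z$. The direct power $\prod_{i\in I}\mathrm{Pr}(S)$ consists of all sequences $[a_i\mid i\in I]$ with $M$ holding coordinatewise. $\mathcal{L}_{s\text{-}pred}(\Pi S)$ is the language extended by a constant symbol for every element of the direct power. An equation is an atomic formula of this language ($M(t_1,t_2,t_3)$ or $t_1=t_2$, each $t_k$ a variable or a constant); a system is any set of equations in a fixed finite set of variables $x_1,\dots,x_n$; two systems are equivalent if they have the same set of solutions in the structure. A structure is $\mathcal{L}_{s\text{-}pred}(\Pi S)$-equationally Noetherian if every such system is equivalent over it to a finite subsystem. *)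

(* Defs.v *)
From mathcomp Require Import all_boot.
Set Implicit Arguments. Unset Strict Implicit. Unset Printing Implicit Defensive.

Definition associative_op (S : Type) (mul : S -> S -> S) : Prop :=
  forall x y z, mul x (mul y z) = mul (mul x y) z.

Definition power (I S : Type) := I -> S.

(* The relation M interpreted in the direct power: coordinatewise xy = z. *)
Definition powM (I S : Type) (mul : S -> S -> S) (x y z : power I S) : Prop :=
  forall i, mul (x i) (y i) = z i.

(* Terms of L_{s-pred}(Pi S) in the variables x_1..x_n:
   a variable, or a constant symbol naming an element of the direct power. *)
Inductive term (C : Type) (n : nat) : Type :=
  | TVar of 'I_n
  | TCst of C.

Inductive equation (C : Type) (n : nat) : Type :=
  | EqM of term C n & term C n & term C n
  | EqEq of term C n & term C n.

Definition eval_term (I S : Type) (n : nat) (v : 'I_n -> power I S)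
  (t : term (power I S) n) : power I S :=
  match t with TVar k => v k | TCst c => c end.

Definition sat_eq (I S : Type) (mul : S -> S -> S) (n : nat)
  (v : 'I_n -> power I S) (e : equation (power I S) n) : Prop :=
  match e with
  | EqM t1 t2 t3 => powM mul (eval_term v t1) (eval_term v t2) (eval_term v t3)
  | EqEq t1 t2 => eval_term v t1 = eval_term v t2
  end.

Definition solution (I S : Type) (mul : S -> S -> S) (n : nat)
  (E : equation (power I S) n -> Prop) (v : 'I_n -> power I S) : Prop :=
  forall e, E e -> sat_eq mul v e.

Fixpoint In_seq (A : Type) (a : A) (l : seq A) : Prop :=
  match l with [::] => False | b :: l' => b = a \/ In_seq a l' end.

Definition power_eq_noetherian (I S : Type) (mul : S -> S -> S) : Prop :=
  forall (n : nat) (E : equation (power I S) n -> Prop),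
    exists l : seq (equation (power I S) n),
      (forall e, In_seq e l -> E e) /\
      (forall v : 'I_n -> power I S,
          solution mul E v <-> solution mul (fun e => In_seq e l) v).

(* Main.v *)
Require Import Defs.
From mathcomp Require Import all_boot.
From Stdlib Require Import Classical FunctionalExtensionality.
Set Implicit Arguments. Unset Strict Implicit. Unset Printing Implicit Defensive.

Definition tshape C n (t : term C n) : option 'I_n :=
  match t with TVar k => Some k | TCst _ => None end.

Definition eshape C n (e : equation C n)
  : (option 'I_n * option 'I_n * option 'I_n + option 'I_n * option 'I_n)%type :=
  match e with
  | EqM a b c => inl (tshape a, tshape b, tshape c)
  | EqEq a b => inr (tshape a, tshape b)
  end.

Definition ev1 S n (w : 'I_n -> S) (t : term S n) : S :=
  match t with TVar k => w k | TCst c => c end.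

Definition sat1 S (mul : S -> S -> S) n (w : 'I_n -> S) (e : equation S n) : Prop :=
  match e with
  | EqM a b c => mul (ev1 w a) (ev1 w b) = ev1 w c
  | EqEq a b => ev1 w a = ev1 w b
  end.

Definition tcoord I S n (i : I) (t : term (power I S) n) : term S n :=
  match t with TVar k => @TVar S n k | TCst c => @TCst S n (c i) end.

Definition ecoord I S n (i : I) (e : equation (power I S) n) : equation S n :=
  match e with
  | EqM a b c => EqM (tcoord i a) (tcoord i b) (tcoord i c)
  | EqEq a b => EqEq (tcoord i a) (tcoord i b)
  end.

Lemma ev_coord I S n (v : 'I_n -> power I S) t i :
  eval_term v t i = ev1 (fun k => v k i) (tcoord i t).
Proof. by case: t. Qed.

Lemma sat_coord I S (mul : S -> S -> S) n (v : 'I_n -> power I S) e :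
  sat_eq mul v e <-> forall i, sat1 mul (fun k => v k i) (ecoord i e).
Proof.
case: e => [t1 t2 t3|t1 t2] /=.
  by split => H i; have := H i; rewrite !ev_coord.
split => [H i|H]; first by rewrite -!ev_coord H.
apply: functional_extensionality => i; rewrite !ev_coord; exact: H.
Qed.

Lemma shape_coord I S n (i : I) (e : equation (power I S) n) :
  eshape (ecoord i e) = eshape e.
Proof. by case: e => [[?|?] [?|?] [?|?]|[?|?] [?|?]]. Qed.

Lemma key S (mul : S -> S -> S)
  (Q1 : forall a b alpha beta : S,
       mul a alpha = mul a beta -> mul b alpha = mul b beta)
  (Q2 : forall a b alpha beta : S,
       mul alpha a = mul beta a -> mul alpha b = mul beta b)
  n (e e' : equation S n) w u :
  eshape e = eshape e' -> sat1 mul w e -> sat1 mul w e' -> sat1 mul u e -> sat1 mul u e'.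
Proof.
case: e => [t1 t2 t3|t1 t2]; case: e' => [s1 s2 s3|s1 s2];
try (case: t1 => ? ; case: t2 => ?; case: s1 => ?; case: s2 => ?);
try (case: t3 => ?; case: s3 => ?);
move=> /= Hsh Hw Hw' Hu; try discriminate; try (injection Hsh; intros; subst);
first [ congruence
      | (eapply Q1; exact Hu) | (eapply Q2; exact Hu)
      | (apply: (etrans _ Hu); symmetry;
         first [ (eapply Q1; exact (etrans Hw (esym Hw')))
               | (eapply Q2; exact (etrans Hw (esym Hw'))) ])
      | (apply: (etrans _ Hw');
         first [ (eapply Q1; exact (etrans Hu (esym Hw)))
               | (eapply Q2; exact (etrans Hu (esym Hw))) ]) ].
Qed.

Lemma per_shape I S (mul : S -> S -> S)
  (Q1 : forall a b alpha beta : S,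
       mul a alpha = mul a beta -> mul b alpha = mul b beta)
  (Q2 : forall a b alpha beta : S,
       mul alpha a = mul beta a -> mul alpha b = mul beta b)
  n (F : equation (power I S) n -> Prop) :
  (forall e e', F e -> F e' -> eshape e = eshape e') ->
  exists l : seq (equation (power I S) n),
      (forall e, In_seq e l -> F e) /\
      (forall v, solution mul F v <-> solution mul (fun e => In_seq e l) v).
Proof.
move=> Hsh.
case: (classic (exists e0, F e0)) => [[e0 F0]|nF]; last first.
  exists [::]; split => // v; split => _ e // Fe.
  by case: nF; exists e.
case: (classic (forall v, sat_eq mul v e0 -> solution mul F v)) => [H|].
  exists [:: e0]; split; first by move=> e /= [<-|[]].
  move=> v; split => [Hs e /= [<-|[]]|Hs]; first exact: Hs.
  by apply: H; apply: Hs; left.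
move=> Hn; have [v Hv] := not_all_ex_not _ _ Hn.
have [Hv0 Hv1] := imply_to_and _ _ Hv.
have [e1 He1] := not_all_ex_not _ _ Hv1.
have [F1 Hn1] := imply_to_and _ _ He1.
exists [:: e0; e1]; split; first by move=> e /= [<-|[<-|[]]].
move=> u; split => [Hs e He|Hs]; first by apply: Hs; case: He => [<-|[<-|[]]].
exfalso; apply: Hn1; apply/sat_coord => i.
have Hu0 := proj1 (sat_coord mul u e0) (Hs e0 (or_introl erefl)) i.
have Hu1 := proj1 (sat_coord mul u e1) (Hs e1 (or_intror (or_introl erefl))) i.
have Hv0i := proj1 (sat_coord mul v e0) Hv0 i.
apply: (key Q1 Q2 _ Hu0 Hu1 Hv0i).
by rewrite !shape_coord; apply: Hsh.
Qed.

Lemma In_seq_cat A (e : A) l1 l2 : In_seq e (l1 ++ l2) <-> In_seq e l1 \/ In_seq e l2.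
Proof.
elim: l1 => [|a l1 IH] /=; first by split => [|[[]|]]; [right|].
rewrite IH; tauto.
Qed.

Lemma sufficiency I S (mul : S -> S -> S)
  (Q1 : forall a b alpha beta : S,
       mul a alpha = mul a beta -> mul b alpha = mul b beta)
  (Q2 : forall a b alpha beta : S,
       mul alpha a = mul beta a -> mul alpha b = mul beta b) :
  power_eq_noetherian I mul.
Proof.
move=> n E.
have gen : forall L : seq (option 'I_n * option 'I_n * option 'I_n + option 'I_n * option 'I_n)%type, exists l : seq (equation (power I S) n),
      (forall e, In_seq e l -> E e /\ eshape e \in L) /\
      (forall v, solution mul (fun e => E e /\ eshape e \in L) v <->
                 solution mul (fun e => In_seq e l) v).
  elim => [|sh L [l2 [Hs2 Hi2]]].
    by exists [::]; split => // v; split => _ e //= [].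
  have [l1 [Hs1 Hi1]] := per_shape Q1 Q2
     (F := fun e => E e /\ eshape e = sh) (fun e e' H H' => etrans H.2 (esym H'.2)).
  exists (l1 ++ l2); split.
    move=> e /In_seq_cat [He|He].
      by have [Ee Hq] := Hs1 e He; split => //; rewrite in_cons Hq eqxx.
    by have [Ee HL] := Hs2 e He; split => //; rewrite in_cons HL orbT.
  move=> v; split => [Hs e /In_seq_cat [He|He]|Hs].
  - apply: ((proj1 (Hi1 v)) _ e He) => e' [Ee' Hq]; apply: Hs; by rewrite in_cons Hq eqxx.
  - apply: ((proj1 (Hi2 v)) _ e He) => e' [Ee' HL]; apply: Hs; by rewrite in_cons HL orbT.
  - move=> e [Ee]; rewrite in_cons => /orP [/eqP Hsh|HL].
      apply: (proj2 (Hi1 v)) => [e' He'|]; last by split.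
      by apply: Hs; apply/In_seq_cat; left.
    apply: (proj2 (Hi2 v)) => [e' He'|]; last by split.
    by apply: Hs; apply/In_seq_cat; right.
have [l [Hs Hi]] := gen (enum {: (option 'I_n * option 'I_n * option 'I_n + option 'I_n * option 'I_n)%type}).
exists l; split; first by move=> e /Hs [].
move=> v; rewrite -Hi; split => H e; first by move=> [Ee _]; apply: H.
by move=> Ee; apply: H; rewrite mem_enum.
Qed.

Lemma bound_list S (P : nat -> S -> Prop) (l : seq S) :
  (forall e, In_seq e l -> exists k, P k e) ->
  exists N, forall e, In_seq e l -> exists k, k < N /\ P k e.
Proof.
elim: l => [|a l IH] H; first by exists 0.
have [N HN] := IH (fun e He => H e (or_intror He)).
have [k Hk] := H a (or_introl erefl).
exists (maxn N k.+1) => e /= [<-|He].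
  by exists k; split => //; rewrite leq_max leqnn orbT.
have [k' [Hk' Pk']] := HN e He; exists k'; split => //.
by rewrite leq_max Hk'.
Qed.

Lemma nec1 S (mul : S -> S -> S) :
  power_eq_noetherian nat mul ->
  forall a b alpha beta : S,
       mul a alpha = mul a beta -> mul b alpha = mul b beta.
Proof.
move=> HN a b al be Hab.
apply: NNPP => nb.
pose ek (k : nat) : equation (power nat S) 1 :=
  EqM (@TCst (power nat S) 1 (fun i => if i == k then b else a))
      (@TVar (power nat S) 1 ord0)
      (@TCst (power nat S) 1 (fun i => if i == k then mul b al else mul a al)).
have [l [Hs Hi]] := HN 1 (fun e => exists k, e = ek k).
have [N HNl] := @bound_list _ (fun k (e : equation (power nat S) 1) => e = ek k) l Hs.
pose v : 'I_1 -> power nat S := fun _ i => if i == N then be else al.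
have Hl : solution mul (fun e => In_seq e l) v.
  move=> e He; have [k [Hk ->]] := HNl e He => i /=.
  rewrite /v; case: (i =P k) => [->|_].
    by rewrite (ltn_eqF Hk).
  by case: (i =P N) => _ //; rewrite Hab.
have := (proj2 (Hi v) Hl) (ek N) (ex_intro _ N erefl) N.
by rewrite /v /= eqxx => /esym.
Qed.

Lemma nec2 S (mul : S -> S -> S) :
  power_eq_noetherian nat mul ->
  forall a b alpha beta : S,
       mul alpha a = mul beta a -> mul alpha b = mul beta b.
Proof.
move=> HN a b al be Hab.
apply: NNPP => nb.
pose ek (k : nat) : equation (power nat S) 1 :=
  EqM (@TVar (power nat S) 1 ord0)
      (@TCst (power nat S) 1 (fun i => if i == k then b else a))
      (@TCst (power nat S) 1 (fun i => if i == k then mul al b else mul al a)).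
have [l [Hs Hi]] := HN 1 (fun e => exists k, e = ek k).
have [N HNl] := @bound_list _ (fun k (e : equation (power nat S) 1) => e = ek k) l Hs.
pose v : 'I_1 -> power nat S := fun _ i => if i == N then be else al.
have Hl : solution mul (fun e => In_seq e l) v.
  move=> e He; have [k [Hk ->]] := HNl e He => i /=.
  rewrite /v; case: (i =P k) => [->|_].
    by rewrite (ltn_eqF Hk).
  by case: (i =P N) => _ //; rewrite Hab.
have := (proj2 (Hi v) Hl) (ek N) (ex_intro _ N erefl) N.
by rewrite /v /= eqxx => /esym.
Qed.

Theorem theorem1 (S : Type) (mul : S -> S -> S) (assoc : associative_op mul) :
  (forall I : Type, power_eq_noetherian I mul) <->
  ((forall a b alpha beta : S,
       mul a alpha = mul a beta -> mul b alpha = mul b beta) /\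
   (forall a b alpha beta : S,
       mul alpha a = mul beta a -> mul alpha b = mul beta b)).
Proof.
split => [H|[Q1 Q2] I]; last exact: sufficiency.
by split; [apply: nec1 | apply: nec2]; apply: H.
Qed.
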